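(* Let $\Lambda$ be a row-finite $k$-graph with no sources and let $\alpha$ be an action of $\mathbb{Z}^l$ on $\Lambda$ by automorphisms. Then $\Lambda$ is $\alpha$-cofinal if and only if $\Lambda\times_\alpha\mathbb{Z}^l$ is cofinal.
   Context: A $k$-graph is a countable category $\Lambda$ with a functor $d:\Lambda\to\mathbb{N}^k$ with unique factorisation; vertices are degree-$0$ morphisms; $v\Lambda w=\{\lambda:r(\lambda)=v,s(\lambda)=w\}$; row-finite: each $v\Lambda^n$ finite; no sources: each $v\Lambda^n$ nonempty. An automorphism is a bijective degree-preserving functor. $\Lambda\times_\alpha\mathbb{Z}^l$ is the $(k+l)$-graph with morphisms $\Lambda\times\mathbb{N}^l$, degree $(d(\lambda),m)$, $r(\lambda,m)=(r(\lambda),0)$, $s(\lambda,m)=(\alpha_{-m}(s(\lambda)),0)$, $(\mu,m)(\nu,n)=(\mu\alpha_m(\nu),m+n)$. For a $j$-graph $\Gamma$, $\Gamma^\infty$ is the set of degree-preserving functors $x:\Omega_j\to\Gamma$ ($\Omega_j=\{(a,b)\in\mathbb{N}^j\times\mathbb{N}^j:a\le b\}$, $r(a,b)=(a,a)$, $s(a,b)=(b,b)$, $d(a,b)=b-a$), and $x(n):=x(n,n)$. $\Gamma$ (row-finite, no sources) is cofinal if for every $x\in\Gamma^\infty$ and vertex $v$ there is $n$ with $v\Gamma x(n)\ne\emptyset$. $\Lambda$ is $\alpha$-cofinal if for every vertex $v$ and $x\in\Lambda^\infty$ there exist $p\in\mathbb{N}^k$ and $m,n\in\mathbb{N}^l$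 with $\alpha_{-m}(v)\Lambda\alpha_{-n}(x(p))\ne\emptyset$. *)

(* Defs.v *)
From Stdlib Require List.
From HB Require Import structures.
From mathcomp Require Import all_boot all_order all_algebra.
Set Implicit Arguments. Unset Strict Implicit. Unset Printing Implicit Defensive.
Import GRing.Theory Num.Theory.

Definition NN (k : nat) := {ffun 'I_k -> nat}.
Definition ZZ (l : nat) := {ffun 'I_l -> int}.

Definition nn0 k : NN k := [ffun _ => 0%N].
Definition nnadd k (a b : NN k) : NN k := [ffun i => (a i + b i)%N].
Definition nnsub k (a b : NN k) : NN k := [ffun i => (a i - b i)%N].
Definition nnle k (a b : NN k) : Prop := forall i, (a i <= b i)%N.

Definition zz0 l : ZZ l := [ffun _ => 0%R].
Definition zzadd l (a b : ZZ l) : ZZ l := [ffun i => (a i + b i)%R].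
Definition zzopp l (a : ZZ l) : ZZ l := [ffun i => (- a i)%R].
Definition nn2zz l (m : NN l) : ZZ l := [ffun i => Posz (m i)].

Definition nncat k l (a : NN k) (b : NN l) : NN (k + l) :=
  [ffun i => match split i with inl j => a j | inr j => b j end].

(* The data of a small category with a degree map to N^k:
   objects V, morphisms M, range r, source s, identities, composition
   (only meaningful on composable pairs s mu = r nu), degree. *)
Record kgraph_data (k : nat) := KGraphData {
  V : Type;
  M : Type;
  rg : M -> V;
  sr : M -> V;
  idm : V -> M;
  comp : M -> M -> M;
  deg : M -> NN k
}.
Arguments V {k}. Arguments M {k}. Arguments rg {k G} _ : rename.
Arguments sr {k G} _ : rename. Arguments idm {k G} _ : rename.
Arguments comp {k G} _ _ : rename. Arguments deg {k G} _ : rename.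

Definition is_kgraph k (G : kgraph_data k) : Prop :=
  (exists f : M G -> nat, injective f) /\
  (forall v : V G, rg (idm v) = v /\ sr (idm v) = v) /\
  (forall mu nu : M G, sr mu = rg nu ->
     rg (comp mu nu) = rg mu /\ sr (comp mu nu) = sr nu) /\
  (forall mu : M G, comp (idm (rg mu)) mu = mu /\ comp mu (idm (sr mu)) = mu) /\
  (forall mu nu la : M G, sr mu = rg nu -> sr nu = rg la ->
     comp (comp mu nu) la = comp mu (comp nu la)) /\
  (forall v : V G, deg (idm v) = nn0 k) /\
  (forall mu nu : M G, sr mu = rg nu ->
     deg (comp mu nu) = nnadd (deg mu) (deg nu)) /\
  (forall (la : M G) (m n : NN k), deg la = nnadd m n ->
     exists mu nu : M G,
       [/\ sr mu = rg nu, deg mu = m, deg nu = n & la = comp mu nu] /\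
       forall mu' nu' : M G,
         [/\ sr mu' = rg nu', deg mu' = m, deg nu' = n & la = comp mu' nu'] ->
         mu' = mu /\ nu' = nu).

Definition row_finite k (G : kgraph_data k) : Prop :=
  forall (v : V G) (n : NN k), exists s : seq (M G),
    forall la : M G, rg la = v -> deg la = n -> List.In la s.

Definition no_sources k (G : kgraph_data k) : Prop :=
  forall (v : V G) (n : NN k), exists la : M G, rg la = v /\ deg la = n.

(* Infinite paths: degree-preserving functors Omega_k -> G, where the
   morphisms of Omega_k are the pairs (a,b) with a <= b, r(a,b)=(a,a),
   s(a,b)=(b,b), d(a,b)=b-a, (a,b)(b,c)=(a,c).  Such a functor is given by
   x : N^k -> N^k -> M G, whose values at pairs with ~(a <= b) are irrelevant. *)
Definition is_infpath k (G : kgraph_data k) (x : NN k -> NN k -> M G) : Prop :=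
  (forall a : NN k, x a a = idm (rg (x a a))) /\
  (forall a b : NN k, nnle a b ->
     [/\ deg (x a b) = nnsub b a,
         rg (x a b) = rg (x a a) & sr (x a b) = rg (x b b)]) /\
  (forall a b c : NN k, nnle a b -> nnle b c ->
     x a c = comp (x a b) (x b c)).

Definition pt k (G : kgraph_data k) (x : NN k -> NN k -> M G) (n : NN k) : V G :=
  rg (x n n).

Definition cofinal k (G : kgraph_data k) : Prop :=
  forall x : NN k -> NN k -> M G, is_infpath x ->
  forall v : V G, exists (n : NN k) (la : M G), rg la = v /\ sr la = pt x n.

Definition is_action k l (G : kgraph_data k)
    (aV : ZZ l -> V G -> V G) (aM : ZZ l -> M G -> M G) : Prop :=
  (forall (m : ZZ l) (la : M G),
     rg (aM m la) = aV m (rg la) /\ sr (aM m la) = aV m (sr la)) /\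
  (forall (m : ZZ l) (v : V G), aM m (idm v) = idm (aV m v)) /\
  (forall (m : ZZ l) (mu nu : M G), sr mu = rg nu ->
     aM m (comp mu nu) = comp (aM m mu) (aM m nu)) /\
  (forall (m : ZZ l) (la : M G), deg (aM m la) = deg la) /\
  (forall m : ZZ l, bijective (aM m) /\ bijective (aV m)) /\
  (forall la : M G, aM (zz0 l) la = la) /\
  (forall v : V G, aV (zz0 l) v = v) /\
  (forall (m n : ZZ l) (la : M G), aM (zzadd m n) la = aM m (aM n la)) /\
  (forall (m n : ZZ l) (v : V G), aV (zzadd m n) v = aV m (aV n v)).

Definition alpha_cofinal k l (G : kgraph_data k)
    (aV : ZZ l -> V G -> V G) (aM : ZZ l -> M G -> M G) : Prop :=
  forall (v : V G) (x : NN k -> NN k -> M G), is_infpath x ->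
  exists (p : NN k) (m n : NN l) (la : M G),
    rg la = aV (zzopp (nn2zz m)) v /\
    sr la = aV (zzopp (nn2zz n)) (pt x p).

(* The (k+l)-graph Lambda x_alpha Z^l: morphisms Lambda x N^l,
   vertices (v,0) (identified with v), d(la,m) = (d la, m),
   r(la,m) = r la, s(la,m) = alpha_{-m}(s la),
   (mu,m)(nu,n) = (mu alpha_m(nu), m+n). *)
Definition crossed k l (G : kgraph_data k)
    (aV : ZZ l -> V G -> V G) (aM : ZZ l -> M G -> M G) : kgraph_data (k + l) :=
  @KGraphData (k + l) (V G) (M G * NN l)%type
    (fun p => rg p.1)
    (fun p => aV (zzopp (nn2zz p.2)) (sr p.1))
    (fun v => (idm v, nn0 l))
    (fun p q => (comp p.1 (aM (nn2zz p.2) q.1), nnadd p.2 q.2))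
    (fun p => nncat (deg p.1) p.2).

(* Main.v *)
Require Import Defs.
From mathcomp Require Import all_boot all_order all_algebra.
From mathcomp Require Import zify.
Set Implicit Arguments. Unset Strict Implicit. Unset Printing Implicit Defensive.
Import GRing.Theory Num.Theory.

Section H.
Variables k l : nat.

Definition fstn (a : NN (k + l)) : NN k := [ffun i => a (lshift l i)].
Definition sndn (a : NN (k + l)) : NN l := [ffun i => a (rshift k i)].

Lemma nncat_l (a : NN k) (b : NN l) i : nncat a b (lshift l i) = a i.
Proof. rewrite ffunE. by have /= -> := unsplitK (inl i : 'I_k + 'I_l). Qed.
Lemma nncat_r (a : NN k) (b : NN l) i : nncat a b (rshift k i) = b i.
Proof. rewrite ffunE. by have /= -> := unsplitK (inr i : 'I_k + 'I_l). Qed.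

Lemma fstn_cat (a : NN k) (b : NN l) : fstn (nncat a b) = a.
Proof. by apply/ffunP=> i; rewrite ffunE nncat_l. Qed.
Lemma sndn_cat (a : NN k) (b : NN l) : sndn (nncat a b) = b.
Proof. by apply/ffunP=> i; rewrite ffunE nncat_r. Qed.
Lemma fstn_sub A B : fstn (nnsub A B) = nnsub (fstn A) (fstn B).
Proof. by apply/ffunP=> i; rewrite !ffunE. Qed.
Lemma sndn_sub A B : sndn (nnsub A B) = nnsub (sndn A) (sndn B).
Proof. by apply/ffunP=> i; rewrite !ffunE. Qed.
Lemma cat_eq (a : NN k) (b : NN l) c : nncat a b = c -> a = fstn c /\ b = sndn c.
Proof. by move=> <-; rewrite fstn_cat sndn_cat. Qed.
Lemma cat_fst_snd A : nncat (fstn A) (sndn A) = A.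
Proof.
apply/ffunP=> i; rewrite -(splitK i); case: (split i) => j /=.
  by rewrite nncat_l ffunE. by rewrite nncat_r ffunE.
Qed.
Lemma nnle_cat (a b : NN k) (m n : NN l) : nnle a b -> nnle m n -> nnle (nncat a m) (nncat b n).
Proof.
move=> H1 H2 i; rewrite -(splitK i); case: (split i) => j /=.
  by rewrite !nncat_l. by rewrite !nncat_r.
Qed.
Lemma nnle_fst A B : nnle A B -> nnle (fstn A) (fstn B).
Proof. by move=> H i; rewrite !ffunE. Qed.
Lemma nnle_snd A B : nnle A B -> nnle (sndn A) (sndn B).
Proof. by move=> H i; rewrite !ffunE. Qed.
Lemma sub_cat (a b : NN k) (m n : NN l) : nnsub (nncat b n) (nncat a m) = nncat (nnsub b a) (nnsub n m).
Proof.
apply/ffunP=> i; rewrite -(splitK i) ffunE; case: (split i) => j /=.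
  by rewrite !nncat_l ffunE. by rewrite !nncat_r ffunE.
Qed.
End H.

Lemma nnsub_nn0 l (a : NN l) : nnsub a a = nn0 l.
Proof. by apply/ffunP=> i; rewrite !ffunE subnn. Qed.
Lemma nnsub0 l (a : NN l) : nnsub a (nn0 l) = a.
Proof. by apply/ffunP=> i; rewrite !ffunE subn0. Qed.
Lemma nn0_sub l : nnsub (nn0 l) (nn0 l) = nn0 l.
Proof. exact: nnsub_nn0. Qed.
Lemma zz_opp0 l : zzopp (nn2zz (nn0 l)) = zz0 l.
Proof. by apply/ffunP=> i; rewrite !ffunE oppr0. Qed.
Lemma zz_0 l : nn2zz (nn0 l) = zz0 l.
Proof. by apply/ffunP=> i; rewrite !ffunE. Qed.
Lemma zz_addN l (m : ZZ l) : zzadd m (zzopp m) = zz0 l.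
Proof. by apply/ffunP=> i; rewrite !ffunE addrN. Qed.
Lemma zz_Nadd l (m : ZZ l) : zzadd (zzopp m) m = zz0 l.
Proof. by apply/ffunP=> i; rewrite !ffunE addNr. Qed.
Lemma zz_sub1 l (m n : NN l) : nnle m n ->
  zzadd (zzopp (nn2zz (nnsub n m))) (zzopp (nn2zz m)) = zzopp (nn2zz n).
Proof. move=> H; apply/ffunP=> i; rewrite !ffunE -opprD -PoszD subnK //. Qed.
Lemma zz_sub2 l (m n : NN l) : nnle m n ->
  zzadd (nn2zz (nnsub n m)) (zzopp (nn2zz n)) = zzopp (nn2zz m).
Proof.
move=> H; apply/ffunP=> i; rewrite !ffunE.
by rewrite -{2}(subnK (H i)) PoszD opprD addrA addrN add0r.
Qed.
Lemma nn_add_sub l (m n p : NN l) : nnle m n -> nnle n p ->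
  nnadd (nnsub n m) (nnsub p n) = nnsub p m.
Proof. move=> H1 H2; apply/ffunP=> i; rewrite !ffunE; have := H1 i; have := H2 i; lia. Qed.
Lemma nnle_refl k (a : NN k) : nnle a a.
Proof. by move=> i. Qed.
Lemma nnadd0 k : nnadd (nn0 k) (nn0 k) = nn0 k.
Proof. by apply/ffunP=> i; rewrite !ffunE. Qed.

Theorem lemma4p6 (k l : nat) (G : kgraph_data k)
    (aV : ZZ l -> V G -> V G) (aM : ZZ l -> M G -> M G) :
  is_kgraph G -> row_finite G -> no_sources G -> is_action aV aM ->
  (alpha_cofinal aV aM <-> cofinal (crossed aV aM)).
Proof.
move=> [_ [Hid [Hcomp [Hunit [Hassoc [Hdid [Hdcomp Hfact]]]]]]] _ _.
move=> [Hars [Haid [Hacomp [Hadeg [_ [HaM0 [HaV0 [HaMadd HaVadd]]]]]]]].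
split.
- move=> Hac y [Hyid [Hydeg Hycomp]] v.
  pose x := fun a b : NN k => (y (nncat a (nn0 l)) (nncat b (nn0 l))).1.
  have Hsnd0 : forall a b, nnle a b -> (y (nncat a (nn0 l)) (nncat b (nn0 l))).2 = nn0 l.
    move=> a b ab; have [D _ _] := Hydeg _ _ (nnle_cat ab (nnle_refl (nn0 l))).
    have [_ ->] := cat_eq D. by rewrite sndn_sub !sndn_cat nn0_sub.
  have Hx : is_infpath x.
    rewrite /is_infpath; split; [|split].
    + move=> a; rewrite /x {1}Hyid. done.
    + move=> a b ab; have [D R S] := Hydeg _ _ (nnle_cat ab (nnle_refl (nn0 l))).
      split.
      * have [-> _] := cat_eq D. by rewrite fstn_sub !fstn_cat.
      * exact: R.
      * move: S => /=; rewrite /x Hsnd0 // zz_opp0 HaV0 => ->. done.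
    + move=> a b c ab bc; rewrite /x.
      rewrite (Hycomp _ _ _ (nnle_cat ab (nnle_refl (nn0 l)))
                            (nnle_cat bc (nnle_refl (nn0 l)))) /=.
      by rewrite Hsnd0 // zz_0 HaM0.
  have [p [m [n [la [Hr Hs]]]]] := Hac v x Hx.
  have Hpt : pt y (nncat p n) = aV (zzopp (nn2zz n)) (pt x p).
    have pn : nnle (nncat p (nn0 l)) (nncat p n) by apply: nnle_cat => // i; rewrite ffunE.
    have [D R S] := Hydeg _ _ pn.
    move: D; rewrite sub_cat nnsub_nn0 => /cat_eq [D1 D2].
    rewrite fstn_cat in D1; rewrite sndn_cat in D2.
    set mu := (y (nncat p (nn0 l)) (nncat p n)).1 in D1 R S.
    have Hmu : mu = idm (rg mu).
      have dmu : deg mu = nnadd (nn0 k) (nn0 k) by rewrite nnadd0 D1.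
      have [m0 [n0 [_ U]]] := Hfact _ _ _ dmu.
      have h1 : [/\ sr (idm (rg mu)) = rg mu, deg (idm (rg mu)) = nn0 k,
                   deg mu = nn0 k & mu = Defs.comp (idm (rg mu)) mu].
        have [_ Hs'] := Hid (rg mu); split; [exact: Hs'|exact: Hdid|exact: D1|].
        by rewrite (proj1 (Hunit mu)).
      have h2 : [/\ sr mu = rg (idm (sr mu)), deg mu = nn0 k,
                   deg (idm (sr mu)) = nn0 k & mu = Defs.comp mu (idm (sr mu))].
        have [Hr' _] := Hid (sr mu); split; [by rewrite Hr'|exact: D1|exact: Hdid|].
        by rewrite (proj2 (Hunit mu)).
      have [U1 _] := U _ _ h1.
      have [U3 _] := U _ _ h2.
      by rewrite {1}U3 U1.
    rewrite /pt -S /= D2 nnsub0 -/mu.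
    rewrite {1}Hmu (proj2 (Hid _)); congr (aV _ _); exact: R.
  exists (nncat p n), (aM (nn2zz m) la, m); split => /=.
  + rewrite (proj1 (Hars _ _)) Hr -HaVadd zz_addN. exact: HaV0.
  + rewrite (proj2 (Hars _ _)) -HaVadd zz_Nadd HaV0 Hs; exact: (esym Hpt).
- move=> Hcof v x [Hxid [Hxdeg Hxcomp]].
  pose y := fun A B : NN (k + l) =>
    (aM (zzopp (nn2zz (sndn A))) (x (fstn A) (fstn B)), nnsub (sndn B) (sndn A)).
  have Hy : is_infpath (G := crossed aV aM) y.
    rewrite /is_infpath; split; [|split].
    + move=> A; rewrite /y /= nnsub_nn0 [in LHS]Hxid Haid.
      by rewrite (proj1 (Hars _ _)) [in RHS]Hxid (proj1 (Hid _)).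
    + move=> A B AB; have [D R S] := Hxdeg _ _ (nnle_fst AB); split => /=.
      * by rewrite Hadeg D -sub_cat !cat_fst_snd.
      * by rewrite !(proj1 (Hars _ _)) R.
      * rewrite (proj2 (Hars _ _)) -HaVadd zz_sub1; last exact: nnle_snd.
        by rewrite (proj1 (Hars _ _)) S.
    + move=> A B C AB BC; rewrite /y /=.
      have [_ _ S] := Hxdeg _ _ (nnle_fst AB).
      have [_ R _] := Hxdeg _ _ (nnle_fst BC).
      rewrite -HaMadd zz_sub2; last exact: nnle_snd.
      rewrite -Hacomp; last by rewrite S R.
      rewrite -Hxcomp; try exact: nnle_fst.
      by rewrite nn_add_sub //; apply: nnle_snd.
  have [q [[la m] [Hr Hs]]] := Hcof y Hy v.
  move: Hr Hs => /= Hr Hs.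
  exists (fstn q), m, (sndn q), (aM (zzopp (nn2zz m)) la); split.
  + by rewrite (proj1 (Hars _ _)) Hr.
  + by rewrite (proj2 (Hars _ _)) Hs /pt /y /= (proj1 (Hars _ _)).
Qed.
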